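(* There exist a stochastic two-armed bandit environment and two base algorithms $\mathcal{B}_1,\mathcal{B}_2$ for it, where $\mathcal{B}_1$ always plays an optimal arm (so $\mathcal{B}_1$ has zero regret), such that the following holds: when the two base algorithms are handed to the master in a uniformly random order, every master algorithm has regret $R(T)=\Omega\!\left(\frac{\sqrt{T}}{\log T}\right)$, i.e. there are constants $c>0$ and $T_0$, independent of the master, with $R(T)\ge c\,\frac{\sqrt T}{\log T}$ for all $T\ge T_0$.
   Context: Model selection (algorithm selection) problem: there is a stochastic $K$-armed bandit environment in which arm $a$ has a fixed reward distribution with mean $\mu_a$; let $\mu^*=\max_a\mu_a$. There are $M$ base algorithms (arbitrary, possibly randomized, bandit algorithms with internal state). A master algorithm interacts for $T$ rounds: in round $t$ it selects an index $j_t\in\{1,\dots,M\}$ based on its past observations; base $j_t$ chooses an arm $a_t$ according to its current state, the arm is played, the reward is observed by the master and passed to base $j_t$, which updates its state; bases not selected do not update. The regret of the master is $R(T)=T\mu^*-\mathbb{E}\big[\sum_{t=1}^T\mu_{a_t}\big]$, the expectation being over all randomness (including the random order of the bases). *)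

(* Defs.v *)
From HB Require Import structures.
From mathcomp Require Import all_boot all_order all_algebra.
From mathcomp Require Import all_classical all_reals all_analysis.
Set Implicit Arguments. Unset Strict Implicit. Unset Printing Implicit Defensive.
Import Order.TTheory GRing.Theory Num.Theory.
Local Open Scope ring_scope.

Section ModelSelection.
Variable R : realType.

Definition arm := 'I_2.

(* A stochastic environment: each arm has a finitely supported reward
   distribution, given as a list of (reward value, probability) pairs. *)
Definition env := arm -> seq (R * R).

Definition env_valid (D : env) : Prop :=
  forall a : arm, (forall x, x \in D a -> 0 <= x.2) /\ \sum_(x <- D a) x.2 = 1.

Definition mean (D : env) (a : arm) : R := \sum_(x <- D a) x.1 * x.2.

Definition opt (D : env) : R := Num.max (mean D ord0) (mean D ord_max).

(* A (randomized) base algorithm: given its own past observations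
   (arms it played and rewards it received; it only updates when selected),
   a probability distribution over arms. *)
Definition base := seq (arm * R) -> arm -> R.

Definition base_valid (B : base) : Prop :=
  forall h, (forall a, 0 <= B h a) /\ \sum_(a < 2) B h a = 1.

(* A (randomized) master algorithm over M = 2 bases: given its past
   observations (selected indices and observed rewards), a probability
   distribution over base indices. *)
Definition master := seq ('I_2 * R) -> 'I_2 -> R.

Definition master_valid (M : master) : Prop :=
  forall h, (forall j, 0 <= M h j) /\ \sum_(j < 2) M h j = 1.

Definition upd (hb : 'I_2 -> seq (arm * R)) (j : 'I_2) (o : arm * R) :=
  fun i : 'I_2 => if i == j then rcons (hb i) o else hb i.

(* Expected sum of mu_{a_t} over the remaining n rounds, given the master's
   history hm and the bases' histories hb; Bs j is the base that the master
   sees under index j. *)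
Fixpoint value (D : env) (M : master) (Bs : 'I_2 -> base) (n : nat)
    (hm : seq ('I_2 * R)) (hb : 'I_2 -> seq (arm * R)) : R :=
  match n with
  | 0 => 0
  | n'.+1 =>
    \sum_(j < 2) M hm j *
      \sum_(a < 2) Bs j (hb j) a *
        (mean D a + \sum_(x <- D a)
                      x.2 * value D M Bs n' (rcons hm (j, x.1)) (upd hb j (a, x.1)))
  end.

(* The bases handed to the master in order: if swap = false, index 0 is B1. *)
Definition ordered (B1 B2 : base) (swap : bool) (j : 'I_2) : base :=
  if (j == ord0) != swap then B1 else B2.

(* E[sum_{t<=T} mu_{a_t}], averaging over the uniformly random order. *)
Definition exp_reward (D : env) (M : master) (B1 B2 : base) (T : nat) : R :=
  2^-1 * (value D M (ordered B1 B2 false) T [::] (fun _ => [::])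
        + value D M (ordered B1 B2 true) T [::] (fun _ => [::])).

Definition regret (D : env) (M : master) (B1 B2 : base) (T : nat) : R :=
  T%:R * opt D - exp_reward D M B1 B2 T.

End ModelSelection.

(* Main.v *)
Require Import Defs.
From HB Require Import structures.
From mathcomp Require Import all_boot all_order all_algebra.
From mathcomp Require Import all_classical all_reals all_analysis.
From mathcomp Require Import ring lra zify.
Import Order.TTheory GRing.Theory Num.Theory.
Local Open Scope ring_scope.

Lemma value_size {R : realType} (D : env R) (M : master R) (Bs : 'I_2 -> base R) :
  (forall j h h', size h = size h' -> Bs j h = Bs j h') ->
  forall n hm hb hb', (forall i, size (hb i) = size (hb' i)) ->
  value D M Bs n hm hb = value D M Bs n hm hb'.
Proof.
move=> HB; elim=> [//|n IH] hm hb hb' Hs /=.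
apply: eq_bigr => j _; rewrite (HB j _ _ (Hs j)); congr (_ * _).
apply: eq_bigr => a _; congr (_ * (_ + _)).
apply: eq_bigr => x _; congr (_ * _); apply: IH => i.
by rewrite /upd; case: (i == j); rewrite ?size_rcons Hs.
Qed.

Lemma sum2 {R : realType} (F : 'I_2 -> R) : \sum_(j < 2) F j = F ord0 + F ord_max.
Proof.
rewrite !big_ord_recl big_ord0 addr0; congr (_ + F _); exact: val_inj.
Qed.


Definition pp {R : realType} (n : nat) : R :=
  4^-1 / (Num.sqrt (n + 3)%:R * ln (n + 3)%:R).
Definition SS {R : realType} (n : nat) : R := 128^-1 / ln (n + 2)%:R.

Lemma ln_diff {R : realType} (x : R) : 1 < x -> x^-1 <= ln x - ln (x - 1).
Proof.
move=> x1.
have x0 : 0 < x by lra.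
have ix : 0 < x^-1 < 1 by rewrite invr_gt0 x0 /= invf_lt1.
have -> : x - 1 = x * (1 + - x^-1) by rewrite mulrDr mulr1 mulrN divff ?gt_eqF.
rewrite lnM ?posrE //; last lra.
have := @le_ln1Dx R (- x^-1) ltac:(lra); lra.
Qed.

Lemma ln_pos {R : realType} n : (0 : R) < ln (n + 2)%:R.
Proof. apply: ln_gt0; rewrite ltr1n; lia. Qed.

Lemma ln2_ge {R : realType} : (2^-1 : R) <= ln 2.
Proof.
have h : (0 : R) = ln 2 + ln (1 + - 2^-1).
  by rewrite -lnM ?posrE //; [rewrite -[X in X = _]ln1; congr ln; field | lra].
have := @le_ln1Dx R (- 2^-1) ltac:(lra); lra.
Qed.

Lemma sqrt_ge1 {R : realType} (x : R) : 1 <= x -> 1 <= Num.sqrt x.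
Proof. by move=> h; rewrite -sqrtr1 ler_wsqrtr. Qed.

Lemma pp_gt0 {R : realType} n : (0 : R) < pp n.
Proof.
rewrite /pp; apply: divr_gt0 => //; apply: mulr_gt0.
  by rewrite sqrtr_gt0 ltr0n; lia.
by apply: ln_gt0; rewrite ltr1n; lia.
Qed.

Lemma pp_le {R : realType} n : (pp n : R) <= 2^-1.
Proof.
have h1 : (1 : R) <= Num.sqrt (n + 3)%:R by apply: sqrt_ge1; rewrite ler1n; lia.
have h2 : (2^-1 : R) <= ln (n + 3)%:R.
  apply: (le_trans ln2_ge); rewrite ler_ln ?posrE ?ltr0n ?ler_nat //; lia.
rewrite /pp ler_pdivrMr; last by apply: mulr_gt0; lra.
nra.
Qed.

Lemma pp_mono {R : realType} m n : (m <= n)%N -> (pp n : R) <= pp m.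
Proof.
move=> mn; rewrite /pp ler_pM2l ?invr_gt0 // lef_pV2 ?posrE.
- apply: ler_pM.
  + exact: sqrtr_ge0.
  + apply: ln_ge0; rewrite ler1n; lia.
  + by rewrite ler_wsqrtr // ler_nat; lia.
  + by rewrite ler_ln ?posrE ?ltr0n ?ler_nat //; lia.
- apply: mulr_gt0; first by rewrite sqrtr_gt0 ltr0n; lia.
  by apply: ln_gt0; rewrite ltr1n; lia.
- apply: mulr_gt0; first by rewrite sqrtr_gt0 ltr0n; lia.
  by apply: ln_gt0; rewrite ltr1n; lia.
Qed.

Lemma SS_ge0 {R : realType} n : (0 : R) <= SS n.
Proof. by rewrite /SS divr_ge0 // ltW // ln_pos. Qed.

Lemma SS0 {R : realType} : (SS 0 : R) <= 64^-1.
Proof.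
rewrite /SS add0n ler_pdivrMr ?ln_pos //.
have := @ln2_ge R; lra.
have := @ln2_ge R; lra.
Qed.

Lemma pp_SS {R : realType} n : (pp n : R) ^+ 2 <= 8 * (SS n - SS n.+1).
Proof.
rewrite /pp /SS addSnnS.
set x : R := (n + 3)%:R.
have x1 : 1 < x by rewrite /x ltr1n; lia.
have E : ((n + 2)%:R : R) = x - 1.
  by rewrite /x (_ : (n + 3 = (n + 2) + 1)%N) ?natrD ?addrK //; lia.
rewrite E.
have hd := @ln_diff R x x1.
have a0 : 0 < ln (x - 1).
  by rewrite -E; apply: ln_pos.
set a := ln (x - 1) in hd a0 *; set b := ln x in hd *.
rewrite expr_div_n exprMn sqr_sqrtr; last lra.
have ixx : 0 < x^-1 by rewrite invr_gt0; lra.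
have ha : a * a^-1 = 1 by rewrite divff ?gt_eqF.
have hb : b * b^-1 = 1 by rewrite divff // gt_eqF //; lra.
have hx : x * x^-1 = 1 by rewrite divff // gt_eqF //; lra.
have ia : 0 < a^-1 by rewrite invr_gt0.
have ib : 0 < b^-1 by rewrite invr_gt0; lra.
rewrite invfM.
have -> : (4^-1 : R) ^+ 2 = 16^-1 by rewrite expr2 -invfM; congr (_^-1); lra.
have e1 : a^-1 - b^-1 = (b - a) * a^-1 * b^-1 by field; apply/andP; split; rewrite gt_eqF //; lra.
have e2 : a^-1 >= b^-1 by rewrite lef_pV2 ?posrE //; lra.
have s1 : x^-1 * b^-1 <= x^-1 * a^-1 by rewrite ler_wpM2l //; lra.
have s2 : x^-1 * a^-1 <= (b - a) * a^-1 by rewrite ler_wpM2r //; lra.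
have : x^-1 * (b^-1 ^+ 2) <= (b - a) * a^-1 * b^-1.
  rewrite expr2 mulrA ler_wpM2r //; [lra | exact: le_trans s1 s2].
nra.
Qed.


Definition U {R : realType} (w0 w1 : R) : R := w0 * w1 / (w0 + w1).

Lemma U_le {R : realType} (w0 w1 : R) : 0 <= w0 -> 0 <= w1 -> U w0 w1 <= w0 /\ U w0 w1 <= w1.
Proof.
move=> h0 h1; rewrite /U.
have [s0|s0] := eqVneq (w0 + w1) 0.
  by rewrite s0 invr0 mulr0; split.
have sp : 0 < w0 + w1 by rewrite lt_def s0 /=; lra.
split; rewrite ler_pdivrMr //.
  - by rewrite ler_wpM2l //; lra.
  - by rewrite mulrC ler_wpM2l //; lra.
Qed.

Lemma U_sym {R : realType} (w0 w1 : R) : U w0 w1 = U w1 w0.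
Proof. by rewrite /U [w0 * w1]mulrC [w0 + w1]addrC. Qed.

Lemma Ustep {R : realType} (w0 w1 p d : R) : 0 <= w0 -> 0 <= w1 -> 0 <= p -> p <= 2^-1 ->
  p ^+ 2 <= 8 * d ->
  U w0 w1 - (w0 + w1) * d <= U (w0 / 2) (w1 * (1 - p) / 2) + U (w0 / 2) (w1 * (1 + p) / 2).
Proof.
move=> h0 h1 hp hp2 hd.
have d0 : 0 <= d by nra.
have [s0|s0] := eqVneq (w0 + w1) 0.
  have e0 : w0 = 0 by lra.
  have e1 : w1 = 0 by lra.
  by rewrite /U e0 e1 !(mul0r, mulr0, add0r, invr0, subr0) oppr0.
have sp : 0 < w0 + w1 by rewrite lt_def s0 /=; lra.
have wp : w1 * p <= w1 * 2^-1 by rewrite ler_wpM2l.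
have t1p : 0 < w0 + w1 * (1 - p) by rewrite mulrBr mulr1; lra.
have wp0 : 0 <= w1 * p by rewrite mulr_ge0.
have t2p : 0 < w0 + w1 * (1 + p) by rewrite mulrDr mulr1; lra.
set s := w0 + w1 in sp s0 *.
have e : U w0 w1 - U (w0 / 2) (w1 * (1 - p) / 2) - U (w0 / 2) (w1 * (1 + p) / 2)
   = (w0 * w1) ^+ 2 * p ^+ 2 / (s * ((w0 + w1 * (1 - p)) * (w0 + w1 * (1 + p)))).
  rewrite /U /s; field.
  by rewrite (gt_eqF t1p) (gt_eqF t2p) /=; exact: s0.
have h8 : 8 * (w0 * w1) ^+ 2 <= s ^+ 2 * ((w0 + w1 * (1 - p)) * (w0 + w1 * (1 + p))).
  have et : (w0 + w1 * (1 - p)) * (w0 + w1 * (1 + p)) = s ^+ 2 - (w1 * p) ^+ 2 by rewrite /s; ring.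
  have q0 : 0 <= w0 * w1 by rewrite mulr_ge0.
  have q4 : 4 * (w0 * w1) <= s ^+ 2 by rewrite /s; have := sqr_ge0 (w0 - w1); rewrite !expr2; nra.
  have q16 : (4 * (w0 * w1)) ^+ 2 <= (s ^+ 2) ^+ 2 by rewrite ler_pXn2r // ?nnegrE; nra.
  have wps : w1 * p <= s / 2 by rewrite /s; lra.
  have wps2 : (w1 * p) ^+ 2 <= (s / 2) ^+ 2 by rewrite ler_pXn2r // ?nnegrE; lra.
  rewrite et.
  have s2 : 0 <= s ^+ 2 by rewrite sqr_ge0.
  nra.
have hX : (w0 * w1) ^+ 2 * p ^+ 2 / (s * ((w0 + w1 * (1 - p)) * (w0 + w1 * (1 + p))))
          <= s * p ^+ 2 / 8.
  rewrite ler_pdivrMr; last by rewrite !mulr_gt0.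
  nra.
have : s * p ^+ 2 / 8 <= s * d by nra.
lra.
Qed.


Definition D0 {R : realType} : env R :=
  fun a => if a == ord0 then [:: (1, 2^-1); (0, 2^-1)] else [:: (0, 1)].
Definition B1 {R : realType} : base R := fun h a => if a == ord0 then 1 else 0.
Definition B2 {R : realType} : base R :=
  fun h a => if a == ord0 then 1 - pp (size h) else pp (size h).

Definition Rg {R : realType} (M : master R) (b : bool) n hm hb : R :=
  n%:R / 2 - value D0 M (ordered B1 B2 b) n hm hb.

Lemma ordered_size {R : realType} b j (h h' : seq (arm * R)) :
  size h = size h' -> ordered B1 B2 b j h = ordered B1 B2 b j h'.
Proof. by move=> E; rewrite /ordered; case: ifP => _ //; rewrite /B2 E. Qed.

Lemma step {R : realType} (M : master R) b n hm hb :
  master_valid M ->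
  let bet j a := ordered B1 B2 b j (hb j) a in
  let rg j r a := Rg M b n (rcons hm (j, r)) (upd hb j (a, r)) in
  (forall j, bet j ord0 + bet j ord_max = 1) ->
  Rg M b n.+1 hm hb =
  M hm ord0 * (bet ord0 ord0 * (2^-1 * rg ord0 1 ord0 + 2^-1 * rg ord0 0 ord0)
               + bet ord0 ord_max * (2^-1 + rg ord0 0 ord0))
  + M hm ord_max * (bet ord_max ord0 * (2^-1 * rg ord_max 1 ord0 + 2^-1 * rg ord_max 0 ord0)
               + bet ord_max ord_max * (2^-1 + rg ord_max 0 ord0)).
Proof.
move=> HM bet rg Hb.
have inv j r : value D0 M (ordered B1 B2 b) n (rcons hm (j, r)) (upd hb j (ord_max, r))
             = value D0 M (ordered B1 B2 b) n (rcons hm (j, r)) (upd hb j (ord0, r)).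
  apply: value_size; first exact: ordered_size.
  by move=> i; rewrite /upd; case: (i == j); rewrite ?size_rcons.
rewrite /rg /bet /Rg /= !sum2 /D0 /mean /= !big_cons !big_nil /= !inv.
have [_ HM1] := HM hm; rewrite sum2 in HM1.
have E0 := Hb ord0; have E1 := Hb ord_max; rewrite /bet in E0 E1.
set m0 := M hm ord0 in HM1 *; set m1 := M hm ord_max in HM1 *.
set b00 := ordered _ _ _ ord0 _ ord0 in E0 *.
set b01 := ordered _ _ _ ord0 _ ord_max in E0 *.
set b10 := ordered _ _ _ ord_max _ ord0 in E1 *.
set b11 := ordered _ _ _ ord_max _ ord_max in E1 *.
have -> : m1 = 1 - m0 by rewrite -HM1; ring.
have -> : b01 = 1 - b00 by rewrite -E0; ring.
have -> : b11 = 1 - b10 by rewrite -E1; ring.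
rewrite -[n.+1]addn1 natrD.
by field.
Qed.


Definition Gp {R : realType} (w0 w1 : R) n0 n1 : R := U w0 w1 - (w0 + w1) * (SS n0 + SS n1).
Definition Cc {R : realType} n s : R := 2^-1 * \sum_(k < n) pp (s + k).

Lemma Gp_le {R : realType} (w0 w1 : R) n0 n1 : 0 <= w0 -> 0 <= w1 ->
  Gp w0 w1 n0 n1 <= w0 /\ Gp w0 w1 n0 n1 <= w1.
Proof.
move=> h0 h1; have [u0 u1] := U_le w0 w1 h0 h1.
have s0 := @SS_ge0 R n0; have s1 := @SS_ge0 R n1.
have : 0 <= (w0 + w1) * (SS n0 + SS n1) by apply: mulr_ge0; lra.
rewrite /Gp; split; lra.
Qed.

Lemma Gp_step0 {R : realType} (w0 w1 : R) n0 n1 : 0 <= w0 -> 0 <= w1 ->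
  Gp w0 w1 n0 n1 <= Gp (w0 / 2) (w1 * (1 - pp n0) / 2) n0.+1 n1
                   + Gp (w0 / 2) (w1 * (1 + pp n0) / 2) n0.+1 n1.
Proof.
move=> h0 h1.
have := Ustep w0 w1 (pp n0) (SS n0 - SS n0.+1) h0 h1 (ltW (pp_gt0 n0)) (pp_le n0) (pp_SS n0).
rewrite /Gp; lra.
Qed.

Lemma Gp_step1 {R : realType} (w0 w1 : R) n0 n1 : 0 <= w0 -> 0 <= w1 ->
  Gp w0 w1 n0 n1 <= Gp (w0 * (1 - pp n1) / 2) (w1 / 2) n0 n1.+1
                   + Gp (w0 * (1 + pp n1) / 2) (w1 / 2) n0 n1.+1.
Proof.
move=> h0 h1.
have := Ustep w1 w0 (pp n1) (SS n1 - SS n1.+1) h1 h0 (ltW (pp_gt0 n1)) (pp_le n1) (pp_SS n1).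
rewrite /Gp !(U_sym w1) (U_sym (w1 / 2)) (U_sym (w1/2)); lra.
Qed.

Lemma Cc_rec {R : realType} n s : (Cc n.+1 s : R) = 2^-1 * pp s + Cc n s.+1.
Proof.
rewrite /Cc big_ord_recl addn0 mulrDr; congr (_ + _ * _).
by apply: eq_bigr => k _; rewrite lift0 /= addSnnS.
Qed.

Lemma Cc_ge0 {R : realType} n s : (0 : R) <= Cc n s.
Proof.
rewrite /Cc mulr_ge0 // sumr_ge0 // => k _; exact: ltW (pp_gt0 _).
Qed.

Lemma ordF0 {R : realType} h a : ordered (R:=R) B1 B2 false ord0 h a = B1 h a.
Proof. by []. Qed.
Lemma ordF1 {R : realType} h a : ordered (R:=R) B1 B2 false ord_max h a = B2 h a.
Proof. by []. Qed.
Lemma ordT0 {R : realType} h a : ordered (R:=R) B1 B2 true ord0 h a = B2 h a.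
Proof. by []. Qed.
Lemma ordT1 {R : realType} h a : ordered (R:=R) B1 B2 true ord_max h a = B1 h a.
Proof. by []. Qed.

Lemma supd00 {R : realType} (hb : 'I_2 -> seq (arm * R)) o :
  size (upd hb ord0 o ord0) = (size (hb ord0)).+1.
Proof. by rewrite /upd /= size_rcons. Qed.
Lemma supd01 {R : realType} (hb : 'I_2 -> seq (arm * R)) o :
  size (upd hb ord0 o ord_max) = size (hb ord_max).
Proof. by []. Qed.
Lemma supd10 {R : realType} (hb : 'I_2 -> seq (arm * R)) o :
  size (upd hb ord_max o ord0) = size (hb ord0).
Proof. by []. Qed.
Lemma supd11 {R : realType} (hb : 'I_2 -> seq (arm * R)) o :
  size (upd hb ord_max o ord_max) = (size (hb ord_max)).+1.
Proof. by rewrite /upd /= size_rcons. Qed.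

Lemma bet_sum {R : realType} b j (h : seq (arm * R)) :
  ordered B1 B2 b j h ord0 + ordered B1 B2 b j h ord_max = 1.
Proof. by rewrite /ordered; case: ifP => _; rewrite /B1 /B2 /=; ring. Qed.

Lemma main_ind {R : realType} (M : master R) : master_valid M -> forall n hm hb0 hb1 (w0 w1 : R),
  0 <= w0 -> 0 <= w1 -> (forall i, size (hb0 i) = size (hb1 i)) ->
  Cc n (size (hb0 ord0) + size (hb0 ord_max)) * Gp w0 w1 (size (hb0 ord0)) (size (hb0 ord_max))
  <= w0 * Rg M false n hm hb0 + w1 * Rg M true n hm hb1.
Proof.
move=> HM; elim=> [|n IH] hm hb0 hb1 w0 w1 h0 h1 Hs.
  rewrite /Cc /Rg big_ord0 /= !mul0r !mulr0 subrr !mulr0 addr0; lra.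
rewrite (step M false n hm hb0 HM (fun j => bet_sum _ _ _)).
rewrite (step M true n hm hb1 HM (fun j => bet_sum _ _ _)).
rewrite !ordF0 !ordF1 !ordT0 !ordT1 /B1 /B2 /= -!Hs.
set N0 := size (hb0 ord0); set N1 := size (hb0 ord_max).
have Hs' j (o o' : arm * R) i : size (upd hb0 j o i) = size (upd hb1 j o' i).
  by rewrite /upd; case: (i == j); rewrite ?size_rcons Hs.
set p0 := pp N0; set p1 := pp N1.
have p0g := pp_gt0 (R:=R) N0; have p1g := pp_gt0 (R:=R) N1.
have p0l := pp_le (R:=R) N0; have p1l := pp_le (R:=R) N1.
rewrite -/p0 -/p1 in p0g p1g p0l p1l.
have ps0 : pp (N0 + N1) <= p0 by apply: pp_mono; lia.
have ps1 : pp (N0 + N1) <= p1 by apply: pp_mono; lia.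
have psg := pp_gt0 (R:=R) (N0 + N1).
set K : R := Cc n (N0 + N1).+1.
have K0 : 0 <= K by apply: Cc_ge0.
have I01 := IH (rcons hm (ord0, 1)) (upd hb0 ord0 (ord0, 1)) (upd hb1 ord0 (ord0, 1))
   (w0 / 2) (w1 * (1 - p0) / 2) ltac:(lra) ltac:(nra) (Hs' _ _ _).
have I00 := IH (rcons hm (ord0, 0)) (upd hb0 ord0 (ord0, 0)) (upd hb1 ord0 (ord0, 0))
   (w0 / 2) (w1 * (1 + p0) / 2) ltac:(lra) ltac:(nra) (Hs' _ _ _).
have I11 := IH (rcons hm (ord_max, 1)) (upd hb0 ord_max (ord0, 1)) (upd hb1 ord_max (ord0, 1))
   (w0 * (1 - p1) / 2) (w1 / 2) ltac:(nra) ltac:(lra) (Hs' _ _ _).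
have I10 := IH (rcons hm (ord_max, 0)) (upd hb0 ord_max (ord0, 0)) (upd hb1 ord_max (ord0, 0))
   (w0 * (1 + p1) / 2) (w1 / 2) ltac:(nra) ltac:(lra) (Hs' _ _ _).
rewrite !supd00 !supd01 !supd10 !supd11 -/N0 -/N1 addSn addnS -/K in I01 I00 I11 I10.
have G0 := Gp_step0 w0 w1 N0 N1 h0 h1; have G1 := Gp_step1 w0 w1 N0 N1 h0 h1.
rewrite -/p0 in G0; rewrite -/p1 in G1.
have KG0 := ler_wpM2l K0 G0; have KG1 := ler_wpM2l K0 G1.
have [g0 g1] := Gp_le w0 w1 N0 N1 h0 h1.
have C0 : pp (N0 + N1) * Gp w0 w1 N0 N1 <= w1 * p0.
  apply: (le_trans (ler_wpM2l (ltW psg) g1)); rewrite mulrC; apply: ler_wpM2l => //.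
have C1 : pp (N0 + N1) * Gp w0 w1 N0 N1 <= w0 * p1.
  apply: (le_trans (ler_wpM2l (ltW psg) g0)); rewrite mulrC; apply: ler_wpM2l => //.
rewrite Cc_rec -/K.
set a01 := Rg M false n (rcons hm (ord0, 1)) _ in I01 I00 I11 I10 *.
set a00 := Rg M false n (rcons hm (ord0, 0)) _ in I01 I00 I11 I10 *.
set a11 := Rg M false n (rcons hm (ord_max, 1)) _ in I01 I00 I11 I10 *.
set a10 := Rg M false n (rcons hm (ord_max, 0)) _ in I01 I00 I11 I10 *.
set b01 := Rg M true n (rcons hm (ord0, 1)) _ in I01 I00 I11 I10 *.
set b00 := Rg M true n (rcons hm (ord0, 0)) _ in I01 I00 I11 I10 *.
set b11 := Rg M true n (rcons hm (ord_max, 1)) _ in I01 I00 I11 I10 *.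
set b10 := Rg M true n (rcons hm (ord_max, 0)) _ in I01 I00 I11 I10 *.
set G := Gp w0 w1 N0 N1 in KG0 KG1 C0 C1 *.
set Z := (2^-1 * pp (N0 + N1) + K) * G.
have hX0 : Z <= w0 * (1 * (2^-1 * a01 + 2^-1 * a00) + 0 * (2^-1 + a00))
              + w1 * ((1 - p0) * (2^-1 * b01 + 2^-1 * b00) + p0 * (2^-1 + b00)).
  rewrite /Z; lra.
have hX1 : Z <= w0 * ((1 - p1) * (2^-1 * a11 + 2^-1 * a10) + p1 * (2^-1 + a10))
              + w1 * (1 * (2^-1 * b11 + 2^-1 * b10) + 0 * (2^-1 + b10)).
  rewrite /Z; lra.
have [Mp Ms] := HM hm; rewrite sum2 in Ms.
have M0Z := ler_wpM2l (Mp ord0) hX0.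
have M1Z := ler_wpM2l (Mp ord_max) hX1.
have eZ : Z = M hm ord0 * Z + M hm ord_max * Z by rewrite -mulrDl Ms mul1r.
lra.
Qed.


Lemma opt_D0 {R : realType} : opt (D0 (R:=R)) = 2^-1.
Proof.
rewrite /opt /mean /D0 /= !big_cons !big_nil /= !(mul1r, mul0r, addr0).
by rewrite max_l //; lra.
Qed.

Lemma mean_D00 {R : realType} : mean (D0 (R:=R)) ord0 = 2^-1.
Proof. by rewrite /mean /D0 /= !big_cons !big_nil /= !(mul1r, mul0r, addr0). Qed.

Lemma final_bound {R : realType} (T : nat) : (3 <= T)%N ->
  256^-1 * Num.sqrt (T%:R) / ln (T%:R) <= (T%:R * pp T / 16 : R).
Proof.
move=> T3.
set x : R := T%:R.
have x3 : 3 <= x by rewrite /x (ler_nat R 3 T).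
set sT := Num.sqrt x; set s3 := Num.sqrt (x + 3).
have sT0 : 0 < sT by rewrite sqrtr_gt0; lra.
have sTx : sT ^+ 2 = x by rewrite sqr_sqrtr //; lra.
have s30 : 0 < s3 by rewrite sqrtr_gt0; lra.
have s3l : s3 <= 2 * sT.
  have -> : 2 * sT = Num.sqrt (2 ^+ 2 * x) by rewrite sqrtrM ?sqrtr_sqr ?ger0_norm //; lra.
  by rewrite ler_wsqrtr //; lra.
have l0 : 0 < ln x by apply: ln_gt0; lra.
have l3l : ln (x + 3) <= 2 * ln x.
  have E : ln (x ^+ 2) = 2 * ln x by rewrite lnXn; [rewrite mulr2n; lra | lra].
  rewrite -E ler_ln ?posrE; [nra | lra | nra].
have l30 : 0 < ln (x + 3) by apply: ln_gt0; lra.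
have key : sT * (s3 * ln (x + 3)) <= 4 * (x * ln x).
  have h1 : s3 * ln (x + 3) <= (2 * sT) * (2 * ln x) by apply: ler_pM; lra.
  have h2 := ler_wpM2l (ltW sT0) h1.
  nra.
have ppT : (pp T : R) = 4^-1 / (s3 * ln (x + 3)) by rewrite /pp natrD.
rewrite ppT.
have e : x * (4^-1 / (s3 * ln (x + 3))) / 16 - 256^-1 * sT / ln x
   = (4 * (x * ln x) - sT * (s3 * ln (x + 3))) / (256 * (ln x * (s3 * ln (x + 3)))).
  field; rewrite !gt_eqF //.
rewrite -subr_ge0 e divr_ge0 //; first lra.
by rewrite !mulr_ge0 // ltW.
Qed.

Theorem mainTheorem2 (R : realType) :
  exists (D : env R) (B1 B2 : base R),
    env_valid D /\ base_valid B1 /\ base_valid B2 /\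
    (forall h a, 0 < B1 h a -> mean D a = opt D) /\
    exists c : R, 0 < c /\ exists T0 : nat,
      forall M : master R, master_valid M ->
      forall T : nat, (T0 <= T)%N ->
        c * Num.sqrt (T%:R) / ln (T%:R) <= regret D M B1 B2 T.
Proof.
exists D0, B1, B2; split.
  move=> a; rewrite /D0; case: (a == ord0); split.
  - by move=> x; rewrite !inE => /orP [] /eqP -> /=.
  - by rewrite !big_cons big_nil /=; lra.
  - by move=> x; rewrite !inE => /eqP -> /=.
  - by rewrite !big_cons big_nil /= addr0.
split.
  by move=> h; rewrite sum2 /B1 /=; split => [a|]; [case: ifP | rewrite addr0].
split.
  move=> h; rewrite sum2 /B2 /=; split => [a|]; last by ring.
  have := pp_gt0 (R:=R) (size h); have := pp_le (R:=R) (size h).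
  case: ifP => _; lra.
split.
  move=> h a; rewrite /B1; case: ifP => [/eqP -> _|_]; last by rewrite ltxx.
  by rewrite opt_D0 mean_D00.
exists 256^-1; split; first by [].
exists 3%N => M HM T T3.
have Hm := main_ind M HM T [::] (fun _ => [::]) (fun _ => [::]) (2^-1) (2^-1)
   ltac:(lra) ltac:(lra) (fun _ => erefl).
rewrite /= in Hm.
have eR : regret D0 M B1 B2 T = 2^-1 * Rg M false T [::] (fun _ => [::])
                               + 2^-1 * Rg M true T [::] (fun _ => [::]).
  rewrite /regret /exp_reward /Rg opt_D0; by field.
rewrite eR.
apply: le_trans (final_bound (R:=R) T T3) _.

apply: le_trans Hm.
have G8 : 8^-1 <= Gp (2^-1 : R) 2^-1 0 0.
  rewrite /Gp /U; have := @SS0 R; have := @SS_ge0 R 0; move=> h1 h2.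
  have -> : (2^-1 : R) + 2^-1 = 1 by field.
  rewrite invr1 mulr1 mul1r; lra.
have CT : T%:R * pp T / 2 <= (Cc T 0 : R).
  rewrite /Cc [X in _ <= X]mulrC ler_pM2r ?invr_gt0 //.
  have : \sum_(k < T) (pp T : R) <= \sum_(k < T) pp (0 + k).
    by apply: ler_sum => k _; apply: pp_mono; rewrite add0n ltnW.
  by rewrite sumr_const card_ord mulr_natl.
have pT := pp_gt0 (R:=R) T.
have x0 : (0 : R) <= T%:R by [].
have a0 : (0 : R) <= T%:R * pp T / 2.
  by apply: mulr_ge0; [apply: mulr_ge0 => //; exact: ltW | rewrite invr_ge0].
have b0 : (0 : R) <= 8^-1 by [].
have := ler_pM a0 b0 CT G8.
rewrite addn0.
lra.
Qed.
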